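(* Suppose that (i) $K:\mathbb R^p\rightrightarrows\mathbb R^n$ is concave, and (ii) $f:\mathbb R^p\times\mathbb R^n\times\mathbb R^n\to\mathbb R^m$ is $C$-concave. Then $\nu(\xi,x)=\sup_{z\in K(\xi)}\operatorname{dist}(f(\xi,x,z),C)$ is a convex function (with values in $[0,+\infty]$) on $\mathbb R^p\times\mathbb R^n$.
   Context: $C\subset\mathbb R^m$ is a nontrivial closed, convex, pointed cone; $K$ has closed graph and nonempty values (standing assumption). A mapping $g:X\to Y$ is $C$-concave if $g(tx_1+(1-t)x_2)-tg(x_1)-(1-t)g(x_2)\in C$ for all $x_1,x_2\in X$, $t\in[0,1]$. A set-valued mapping $F:X\rightrightarrows Y$ is concave if $F(tx_1+(1-t)x_2)\subseteq tF(x_1)+(1-t)F(x_2)$ for all $x_1,x_2$, $t\in[0,1]$. *)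

(* Defs.v *)
From HB Require Import structures.
From mathcomp Require Import all_boot all_order all_algebra.
From mathcomp Require Import all_classical all_reals all_analysis.
Set Implicit Arguments. Unset Strict Implicit. Unset Printing Implicit Defensive.
Import Order.TTheory GRing.Theory Num.Theory.
Import numFieldNormedType.Exports.
Local Open Scope classical_set_scope.
Local Open Scope ring_scope.

Section Defs.
Variable R : realType.

Definition enorm (k : nat) (v : 'rV[R]_k) : R :=
  Num.sqrt (\sum_(i < k) (v ord0 i) ^+ 2).

Definition edist (k : nat) (y : 'rV[R]_k) (C : set 'rV[R]_k) : \bar R :=
  ereal_inf [set (enorm (y - c))%:E | c in C].

Definition is_cone (k : nat) (C : set 'rV[R]_k) : Prop :=
  C 0 /\ forall (l : R) c, 0 <= l -> C c -> C (l *: c).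
Definition is_convex_set (k : nat) (C : set 'rV[R]_k) : Prop :=
  forall (t : R) a b, 0 <= t <= 1 -> C a -> C b -> C (t *: a + (1 - t) *: b).
Definition is_pointed (k : nat) (C : set 'rV[R]_k) : Prop :=
  forall c, C c -> C (- c) -> c = 0.
Definition nontrivial_set (k : nat) (C : set 'rV[R]_k) : Prop :=
  exists c, C c /\ c <> 0.

Definition C_concave (p n m : nat) (C : set 'rV[R]_m)
  (f : 'rV[R]_p -> 'rV[R]_n -> 'rV[R]_n -> 'rV[R]_m) : Prop :=
  forall (t : R) xi1 x1 z1 xi2 x2 z2, 0 <= t <= 1 ->
    C (f (t *: xi1 + (1 - t) *: xi2) (t *: x1 + (1 - t) *: x2)
         (t *: z1 + (1 - t) *: z2)
       - t *: f xi1 x1 z1 - (1 - t) *: f xi2 x2 z2).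

Definition sv_concave (p n : nat) (K : 'rV[R]_p -> set 'rV[R]_n) : Prop :=
  forall (t : R) a b, 0 <= t <= 1 ->
    forall z, K (t *: a + (1 - t) *: b) z ->
      exists z1 z2, K a z1 /\ K b z2 /\ z = t *: z1 + (1 - t) *: z2.

Definition closed_graph (p n : nat) (K : 'rV[R]_p -> set 'rV[R]_n) : Prop :=
  closed [set q : 'rV[R]_p * 'rV[R]_n | K q.1 q.2].

Definition nu (p n m : nat) (K : 'rV[R]_p -> set 'rV[R]_n)
  (f : 'rV[R]_p -> 'rV[R]_n -> 'rV[R]_n -> 'rV[R]_m) (C : set 'rV[R]_m)
  (xi : 'rV[R]_p) (x : 'rV[R]_n) : \bar R :=
  ereal_sup [set edist (f xi x z) C | z in K xi].

Definition ext_convex (p n : nat) (g : 'rV[R]_p -> 'rV[R]_n -> \bar R) : Prop :=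
  forall (t : R) (xi1 xi2 : 'rV[R]_p) (x1 x2 : 'rV[R]_n), 0 < t < 1 ->
    (g (t *: xi1 + (1 - t) *: xi2)%R (t *: x1 + (1 - t) *: x2)%R
      <= t%:E * g xi1 x1 + (1 - t)%:E * g xi2 x2)%E.

End Defs.

(* Main.v *)
Require Import Defs.
From HB Require Import structures.
From mathcomp Require Import all_boot all_order all_algebra.
From mathcomp Require Import all_classical all_reals all_analysis.
From mathcomp Require Import lra ring.
Import Order.TTheory GRing.Theory Num.Theory.
Import numFieldNormedType.Exports.
Local Open Scope classical_set_scope.
Local Open Scope ring_scope.

Section Aux.
Variable R : realType.

Lemma sumsq_ge0 k (u : 'I_k -> R) : 0 <= \sum_(i < k) u i ^+ 2.
Proof. by apply: sumr_ge0 => i _; rewrite sqr_ge0. Qed.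

Lemma cs_aux k (u v : 'I_k -> R) :
  \sum_(i < k) u i * v i <=
  Num.sqrt (\sum_(i < k) u i ^+ 2) * Num.sqrt (\sum_(i < k) v i ^+ 2).
Proof.
set Su := \sum_(i < k) u i ^+ 2; set Sv := \sum_(i < k) v i ^+ 2.
set a := Num.sqrt Su; set b := Num.sqrt Sv.
have Su0 : 0 <= Su by exact: sumsq_ge0.
have Sv0 : 0 <= Sv by exact: sumsq_ge0.
have a2 : a ^+ 2 = Su by rewrite sqr_sqrtr.
have b2 : b ^+ 2 = Sv by rewrite sqr_sqrtr.
have a0 : 0 <= a by exact: sqrtr_ge0.
have b0 : 0 <= b by exact: sqrtr_ge0.
have [az|anz] := eqVneq a 0.
  have : Su = 0 by rewrite -a2 az expr0n.
  move/eqP; rewrite psumr_eq0; last by move=> i _; rewrite sqr_ge0.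
  move/allP => H; rewrite big1 ?az ?mul0r // => i _.
  have := H i (mem_index_enum _); rewrite /= sqrf_eq0 => /eqP ->.
  by rewrite mul0r.
have [bz|bnz] := eqVneq b 0.
  have : Sv = 0 by rewrite -b2 bz expr0n.
  move/eqP; rewrite psumr_eq0; last by move=> i _; rewrite sqr_ge0.
  move/allP => H; rewrite big1 ?bz ?mulr0 // => i _.
  have := H i (mem_index_enum _); rewrite /= sqrf_eq0 => /eqP ->.
  by rewrite mulr0.
have ab0 : 0 < a * b by rewrite mulr_gt0 // lt0r ?anz ?bnz.
have key : (2 * (a * b)) * \sum_(i < k) u i * v i <=
           \sum_(i < k) (b ^+ 2 * u i ^+ 2 + a ^+ 2 * v i ^+ 2).
  rewrite mulr_sumr; apply: ler_sum => i _.
  have := sqr_ge0 (b * u i - a * v i); nra.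
move: key; rewrite big_split /= -!mulr_sumr -/Su -/Sv -a2 -b2 => key.
have : (2 * (a * b)) * \sum_(i < k) u i * v i <= (2 * (a * b)) * (a * b).
  by apply: (le_trans key); rewrite -(mulrC (a^+2)); nra.
by rewrite ler_pM2l // mulr_gt0.
Qed.

Lemma enormD k (u v : 'rV[R]_k) : enorm (u + v) <= enorm u + enorm v.
Proof.
rewrite /enorm.
have h1 := sqrtr_ge0 (\sum_(i < k) u ord0 i ^+ 2).
have h2 := sqrtr_ge0 (\sum_(i < k) v ord0 i ^+ 2).
rewrite -(ger0_norm (addr_ge0 h1 h2)) -sqrtr_sqr; apply: ler_wsqrtr.
have e : \sum_(i < k) (u + v) ord0 i ^+ 2 =
   \sum_(i < k) u ord0 i ^+ 2 + 2 * \sum_(i < k) u ord0 i * v ord0 i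
   + \sum_(i < k) v ord0 i ^+ 2.
  rewrite mulr_sumr -!big_split /=; apply: eq_bigr => i _; rewrite mxE; ring.
rewrite e sqrrD !sqr_sqrtr; try exact: (@sumsq_ge0 k (fun i => _ ord0 i)).
have := @cs_aux k (fun i => u ord0 i) (fun i => v ord0 i); rewrite /= mulr2n.
lra.
Qed.

Lemma enormZ k (l : R) (u : 'rV[R]_k) : 0 <= l -> enorm (l *: u) = l * enorm u.
Proof.
move=> l0; rewrite /enorm.
have -> : \sum_(i < k) (l *: u) ord0 i ^+ 2 = l ^+ 2 * \sum_(i < k) u ord0 i ^+ 2.
  by rewrite mulr_sumr; apply: eq_bigr => i _; rewrite mxE exprMn.
by rewrite sqrtrM ?sqr_ge0 // sqrtr_sqr ger0_norm.
Qed.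

Lemma enorm_ge0 k (u : 'rV[R]_k) : 0 <= enorm u.
Proof. exact: sqrtr_ge0. Qed.

Definition dR k (C : set 'rV[R]_k) (y : 'rV[R]_k) := inf [set enorm (y - c) | c in C].

Arguments dR {k}.

Lemma dR_lb k (C : set 'rV[R]_k) y : has_lbound [set enorm (y - c) | c in C].
Proof. by exists 0 => _ [c _ <-]; exact: enorm_ge0. Qed.

Lemma edist_dR k (C : set 'rV[R]_k) y : C 0 -> Defs.edist y C = (dR C y)%:E.
Proof.
move=> C0; rewrite /Defs.edist /dR -ereal_inf_EFin; last by exists (enorm (y - 0)), 0.
  by rewrite image_comp.
exact: dR_lb.
Qed.

Lemma dR_ge0 k (C : set 'rV[R]_k) y : C 0 -> 0 <= dR C y.
Proof.
move=> C0; apply: lb_le_inf; first by exists (enorm (y - 0)), 0.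
by move=> _ [c _ <-]; exact: enorm_ge0.
Qed.

Lemma cone_add k (C : set 'rV[R]_k) : is_cone C -> is_convex_set C ->
  forall a b, C a -> C b -> C (a + b).
Proof.
move=> [C0 Cs] Cc a b Ca Cb.
have h : C (2^-1 *: a + (1 - 2^-1) *: b).
  by apply: Cc => //; apply/andP; split; rewrite ?invr_ge0 ?invf_le1 ?ler1n.
have := Cs 2 _ (ler0n _ 2) h.
have -> : (1 - 2^-1 : R) = 2^-1 by field.
by rewrite scalerDr !scalerA divff ?pnatr_eq0 // !scale1r.
Qed.

Lemma dR_mix k (C : set 'rV[R]_k) (t : R) a b c0 :
  is_cone C -> is_convex_set C -> 0 < t < 1 -> C c0 ->
  dR C (t *: a + (1 - t) *: b + c0) <= t * dR C a + (1 - t) * dR C b.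
Proof.
move=> Cn Cc /andP[t0 t1] Cc0.
have C0 : C 0 by case: Cn.
have step : forall ca cb, C ca -> C cb ->
   dR C (t *: a + (1 - t) *: b + c0) <= t * enorm (a - ca) + (1 - t) * enorm (b - cb).
  move=> ca cb Ca Cb.
  have Cc' : C (t *: ca + (1 - t) *: cb + c0).
    apply: cone_add => //; apply: Cc => //; apply/andP; split; exact: ltW.
  apply: le_trans; first exact: (ge_inf (@dR_lb _ C _) (ex_intro2 _ _ _ Cc' erefl)).
  have -> : t *: a + (1 - t) *: b + c0 - (t *: ca + (1 - t) *: cb + c0)
      = t *: (a - ca) + (1 - t) *: (b - cb).
    by apply/rowP => i; rewrite !mxE; ring.
  apply: le_trans; first exact: enormD.
  by rewrite !enormZ ?subr_ge0 ?(ltW t0) ?(ltW t1).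
have t1' : 0 < 1 - t by rewrite subr_gt0.
have step2 : forall cb, C cb ->
   dR C (t *: a + (1 - t) *: b + c0) <= t * dR C a + (1 - t) * enorm (b - cb).
  move=> cb Cb.
  set D := dR C _; set E := enorm _.
  have : (D - (1 - t) * E) / t <= dR C a.
    apply: lb_le_inf; first by exists (enorm (a - 0)), 0.
    move=> _ [ca Ca <-]; rewrite ler_pdivrMr //.
    have := step ca cb Ca Cb; rewrite -/D -/E; lra.
  rewrite ler_pdivrMr // => h; lra.
set D := dR C _.
have : (D - t * dR C a) / (1 - t) <= dR C b.
  apply: lb_le_inf; first by exists (enorm (b - 0)), 0.
  move=> _ [cb Cb <-]; rewrite ler_pdivrMr //.
  have := step2 cb Cb; rewrite -/D; lra.
rewrite ler_pdivrMr // => h; lra.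
Qed.

End Aux.
Arguments dR {R k}.


Theorem mainTheorem4 (R : realType) (p n m : nat) (C : set 'rV[R]_m)
  (K : 'rV[R]_p -> set 'rV[R]_n)
  (f : 'rV[R]_p -> 'rV[R]_n -> 'rV[R]_n -> 'rV[R]_m)
  (hCcl : closed C) (hCcone : is_cone C) (hCcvx : is_convex_set C)
  (hCpt : is_pointed C) (hCnt : nontrivial_set C)
  (hKgr : closed_graph K) (hKne : forall xi, K xi !=set0)
  (hK : sv_concave K) (hf : C_concave C f) :
  ext_convex (nu K f C).
Proof.
move=> t xi1 xi2 x1 x2 t01.
have C0 : C 0 by case: hCcone.
have t01' : 0 <= t <= 1 by case/andP: t01 => a b; rewrite !ltW.
apply: ge_ereal_sup => _ [z Kz <-].
have [z1 [z2 [K1 [K2 ->]]]] := hK t xi1 xi2 t01' z Kz.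
have Cc0 := hf t xi1 x1 z1 xi2 x2 z2 t01'.
set F1 := f xi1 x1 z1; set F2 := f xi2 x2 z2.
set c0 := (X in C X) in Cc0.
have -> : f (t *: xi1 + (1 - t) *: xi2) (t *: x1 + (1 - t) *: x2)
    (t *: z1 + (1 - t) *: z2) = t *: F1 + (1 - t) *: F2 + c0.
  by rewrite /c0; apply/rowP => i; rewrite !mxE; ring.
rewrite edist_dR //.
apply: (@le_trans _ _ ((t * dR C F1 + (1 - t) * dR C F2)%:E)).
  by rewrite lee_fin; exact: dR_mix.
have t0 : 0 <= t by case/andP: t01'.
have t1 : 0 <= 1 - t by case/andP: t01' => _ h; rewrite subr_ge0.
rewrite EFinD !EFinM; apply: leeD; apply: lee_wpmul2l; rewrite ?lee_fin //;
  rewrite -edist_dR //; apply: ereal_sup_ubound.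
  by exists z1.
by exists z2.
Qed.
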